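(* Let $X_1,X_2,\dots$ be i.i.d. integer-valued random variables. Then for every $n\ge1$, $$H_2\Big(\sum_{i=1}^n X_i\Big)\le H_2\Big(\sum_{i=1}^{n+1}X_i\Big).$$
   Context: For an integer-valued random variable $Z$, $H_2(Z)=-\log\sum_{z}\mathbf P\{Z=z\}^2$ is its Rényi entropy of order $2$ (collision entropy). *)

(* Defs.v *)
From Stdlib Require Import Reals ZArith.
Open Scope R_scope.

Definition Zsum_is (f : Z -> R) (l : R) : Prop :=
  exists a b : R,
    infinite_sum (fun n : nat => f (Z.of_nat n)) a /\
    infinite_sum (fun n : nat => f (- Z.of_nat (S n))%Z) b /\
    a + b = l.

Definition is_pmf (p : Z -> R) : Prop :=
  (forall z, 0 <= p z) /\ Zsum_is p 1.

(* law_of_sum p n q : q is the law of X_1 + ... + X_n where the X_i are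
   i.i.d. with common law p (n >= 1).  The law of a sum of independent
   integer-valued variables is the convolution of the laws:
   P(S_{n+1} = z) = sum_k P(S_n = k) P(X_{n+1} = z - k). *)
Inductive law_of_sum (p : Z -> R) : nat -> (Z -> R) -> Prop :=
| law_of_sum_one : law_of_sum p 1 p
| law_of_sum_succ : forall n q r,
    law_of_sum p n q ->
    (forall z, Zsum_is (fun k => q k * p (z - k)%Z) (r z)) ->
    law_of_sum p (S n) r.

(* Renyi entropy of order 2 of a law q: H_2 = h iff h = - log sum_z q(z)^2
   (natural logarithm; the base does not affect the inequality). *)
Definition H2_is (q : Z -> R) (h : R) : Prop :=
  exists s, Zsum_is (fun z => q z ^ 2) s /\ h = - ln s.

(* Main.v *)
Require Import Defs.
From Stdlib Require Import Reals ZArith Lra Lia Classical FunctionalExtensionality.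
Open Scope R_scope.

Fixpoint W (f : Z -> R) (c : Z) (n : nat) : R :=
  match n with
  | O => 0
  | S m => W f c m + f (c + Z.of_nat m)%Z
  end.

Lemma W_cat f c n m : W f c (n + m) = W f c n + W f (c + Z.of_nat n)%Z m.
Proof.
  induction m; simpl.
  - rewrite Nat.add_0_r; ring.
  - rewrite Nat.add_succ_r; simpl. rewrite IHm.
    replace (c + Z.of_nat (n + m))%Z with (c + Z.of_nat n + Z.of_nat m)%Z by lia. ring.
Qed.

Lemma W_ext f g c n : (forall z, f z = g z) -> W f c n = W g c n.
Proof. intros H; induction n; simpl; [reflexivity| rewrite IHn, H; reflexivity]. Qed.

Lemma W_le f g c n : (forall z, f z <= g z) -> W f c n <= W g c n.
Proof. intros H; induction n; simpl; [lra| specialize (H (c + Z.of_nat n)%Z); lra]. Qed.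

Lemma W_nonneg f c n : (forall z, 0 <= f z) -> 0 <= W f c n.
Proof. intros H; induction n; simpl; [lra| specialize (H (c + Z.of_nat n)%Z); lra]. Qed.

Lemma W_plus f g c n : W (fun z => f z + g z) c n = W f c n + W g c n.
Proof. induction n; simpl; [ring| rewrite IHn; ring]. Qed.

Lemma W_scal a f c n : W (fun z => a * f z) c n = a * W f c n.
Proof. induction n; simpl; [ring| rewrite IHn; ring]. Qed.

Lemma W_zero c n : W (fun _ => 0) c n = 0.
Proof. induction n; simpl; [ring| rewrite IHn; ring]. Qed.

Lemma W_swap (F : Z -> Z -> R) c n c' n' :
  W (fun z => W (fun k => F z k) c n) c' n' = W (fun k => W (fun z => F z k) c' n') c n.
Proof.
  induction n'; simpl.
  - rewrite W_zero; reflexivity.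
  - rewrite IHn', <- W_plus. reflexivity.
Qed.

Lemma W_shift f k c n : W (fun z => f (z - k)%Z) c n = W f (c - k)%Z n.
Proof. induction n; simpl; [reflexivity| rewrite IHn; f_equal; f_equal; lia]. Qed.

Lemma W_rev f z c n : W (fun k => f (z - k)%Z) c n = W f (z - c - Z.of_nat n + 1)%Z n.
Proof.
  induction n; [reflexivity|].
  change (W (fun k => f (z - k)%Z) c (S n)) with (W (fun k => f (z - k)%Z) c n + f (z - (c + Z.of_nat n))%Z).
  rewrite IHn. replace (S n) with (1 + n)%nat by reflexivity. rewrite W_cat.
  replace (z - c - Z.of_nat (1 + n) + 1 + Z.of_nat 1)%Z with (z - c - Z.of_nat n + 1)%Z by lia.
  assert (E: forall d, W f d 1 = f d) by (intro d; simpl; rewrite Z.add_0_r; ring).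
  rewrite E. replace (z - c - Z.of_nat (1+n) + 1)%Z with (z - (c + Z.of_nat n))%Z by lia. ring.
Qed.

Lemma W_mono f c n c' n' : (forall z, 0 <= f z) -> (c' <= c)%Z ->
  (c + Z.of_nat n <= c' + Z.of_nat n')%Z -> W f c n <= W f c' n'.
Proof.
  intros Hf H1 H2.
  set (a := Z.to_nat (c - c')). set (b := (n' - a - n)%nat).
  assert (n' = a + (n + b))%nat by lia.
  rewrite H, W_cat, W_cat.
  replace (c' + Z.of_nat a)%Z with c by lia.
  pose proof (W_nonneg f c' a Hf). pose proof (W_nonneg f (c + Z.of_nat n) b Hf). lra.
Qed.

Lemma W_CS a b c n : (forall z, 0 <= b z) ->
  (W (fun k => a k * b k) c n)^2 <= W b c n * W (fun k => a k ^2 * b k) c n.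
Proof.
  intros Hb; induction n; [simpl; lra| cbn [W]].
  set (A := W b c n) in *. set (B := W (fun k => a k * b k) c n) in *.
  set (C := W (fun k => a k ^ 2 * b k) c n) in *.
  set (x := a (c + Z.of_nat n)%Z). set (w := b (c + Z.of_nat n)%Z).
  assert (0 <= w) by apply Hb.
  assert (0 <= A) by (apply W_nonneg; auto).
  assert (0 <= C) by (apply W_nonneg; intro; specialize (Hb z); nra).
  assert (Q : 0 <= A * x^2 - 2 * B * x + C).
  { destruct (Req_dec A 0) as [HA|HA].
    - assert (B = 0) by (rewrite HA in IHn; nra). subst; nra.
    - assert (0 < A) by lra.
      assert (0 <= (A*x-B)^2) by apply pow2_ge_0.
      assert (0 <= A * (A * x^2 - 2*B*x + C)) by (replace (A * (A * x^2 - 2*B*x + C)) with ((A*x-B)^2 + (A*C - B^2)) by ring; lra).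
      set (Y := A * x^2 - 2*B*x + C) in *. clearbody Y.
      destruct (Rle_or_lt 0 Y); [auto|]. assert (A * Y < 0) by nra. lra. }
  assert (0 <= w * (A * x^2 - 2 * B * x + C)) by (apply Rmult_le_pos; auto).
  replace ((A + w) * (C + x ^ 2 * w)) with ((B + x*w)^2 + (A*C - B^2) + w * (A * x^2 - 2 * B * x + C)) by ring.
  lra.
Qed.
Lemma Un_cv_ext u v l : (forall n, u n = v n) -> Un_cv u l -> Un_cv v l.
Proof. intros H Hu eps He. destruct (Hu eps He) as [N HN]. exists N; intros n Hn. rewrite <- H. auto. Qed.

Lemma Un_cv_const c : Un_cv (fun _ => c) c.
Proof. intros eps He. exists O; intros. unfold Rdist. rewrite Rminus_diag, Rabs_R0. lra. Qed.

Lemma lim_le u l c : (forall n, u n <= c) -> Un_cv u l -> l <= c.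
Proof.
  intros H Hu. destruct (Rle_or_lt l c) as [|Hlt]; [auto|].
  destruct (Hu (l - c)) as [N HN]; [lra|].
  specialize (HN N (le_n N)). specialize (H N). unfold Rdist in HN.
  apply Rabs_def2 in HN. lra.
Qed.

Lemma W_pos_sum f M : W f 0 (S M) = sum_f_R0 (fun n => f (Z.of_nat n)) M.
Proof.
  induction M.
  - simpl. ring.
  - change (W f 0 (S (S M))) with (W f 0 (S M) + f (0 + Z.of_nat (S M))%Z).
    rewrite IHM. simpl sum_f_R0. reflexivity.
Qed.

Lemma W1 f d : W f d 1 = f d.
Proof. simpl. rewrite Z.add_0_r. ring. Qed.

Lemma W_neg_sum f M : W f (- Z.of_nat (S M))%Z (S M) = sum_f_R0 (fun n => f (- Z.of_nat (S n))%Z) M.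
Proof.
  induction M.
  - rewrite W1. simpl. ring.
  - replace (S (S M)) with (1 + S M)%nat by reflexivity. rewrite W_cat.
    replace (- Z.of_nat (1 + S M) + Z.of_nat 1)%Z with (- Z.of_nat (S M))%Z by lia.
    rewrite IHM, W1. change (sum_f_R0 (fun n => f (- Z.of_nat (S n))%Z) (S M)) with (sum_f_R0 (fun n => f (- Z.of_nat (S n))%Z) M + f (- Z.of_nat (S (S M)))%Z). replace (1 + S M)%nat with (S (S M)) by lia. ring.
Qed.

Definition SW f M := W f (- Z.of_nat M)%Z (2 * M + 1).

Lemma SW_split f M : SW f M = W f (- Z.of_nat M)%Z M + W f 0 (S M).
Proof.
  unfold SW. replace (2 * M + 1)%nat with (M + S M)%nat by lia.
  rewrite W_cat. replace (- Z.of_nat M + Z.of_nat M)%Z with 0%Z by lia. reflexivity.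
Qed.

Lemma Zsum_lim f l : Zsum_is f l -> Un_cv (SW f) l.
Proof.
  intros [a [b [Ha [Hb Hab]]]]. subst l.
  apply Un_cv_ext with (fun M => W f (- Z.of_nat M)%Z M + W f 0 (S M)).
  { intros; symmetry; apply SW_split. }
  rewrite Rplus_comm. apply CV_plus.
  - apply CV_shift with 1%nat.
    apply Un_cv_ext with (sum_f_R0 (fun n => f (- Z.of_nat (S n))%Z)).
    { intros n. rewrite Nat.add_1_r. symmetry; apply W_neg_sum. }
    exact Hb.
  - apply Un_cv_ext with (sum_f_R0 (fun n => f (Z.of_nat n))).
    { intros n. symmetry; apply W_pos_sum. }
    exact Ha.
Qed.

Lemma Zsum_le f l c n : (forall z, 0 <= f z) -> Zsum_is f l -> W f c n <= l.
Proof.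
  intros Hf Hl.
  assert (G : Un_growing (SW f)).
  { intro M. unfold SW. apply W_mono; auto; lia. }
  pose proof (growing_ineq _ _ G (Zsum_lim f l Hl)) as H.
  eapply Rle_trans; [| apply (H (Z.to_nat (Z.abs c) + n)%nat)].
  unfold SW; apply W_mono; auto; lia.
Qed.

Lemma lim_finite (G : nat -> Z -> R) L c n :
  (forall z, Un_cv (fun M => G M z) (L z)) -> Un_cv (fun M => W (G M) c n) (W L c n).
Proof.
  intros H; induction n; simpl.
  - apply Un_cv_const.
  - apply CV_plus; auto.
Qed.

Lemma main_ineq p q r s s' :
  (forall z, 0 <= p z) -> (forall z, 0 <= q z) -> Zsum_is p 1 ->
  Zsum_is (fun z => q z ^ 2) s ->
  (forall z, Zsum_is (fun k => q k * p (z - k)%Z) (r z)) ->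
  Zsum_is (fun z => r z ^ 2) s' -> s' <= s.
Proof.
  intros Hp Hq Hp1 Hs Hr Hs'.
  set (g := fun M z => SW (fun k => q k * p (z - k)%Z) M).
  assert (Hq2 : forall z, 0 <= q z ^ 2) by (intro; apply pow2_ge_0).
  assert (HN : forall N, SW (fun z => r z ^ 2) N <= s).
  { intro N. apply lim_le with (fun M => SW (fun z => g M z ^ 2) N).
    2: { unfold SW. apply lim_finite. intro z.
         apply Un_cv_ext with (fun M => g M z * g M z).
         { intro; ring. }
         replace (r z ^ 2) with (r z * r z) by ring.
         apply CV_mult; apply Zsum_lim; apply Hr. }
    intro M. unfold SW.
    eapply Rle_trans.
    { apply W_le with (g := fun z => W (fun k => q k ^ 2 * p (z - k)%Z) (- Z.of_nat M) (2 * M + 1)).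
      intro z. unfold g, SW.
      eapply Rle_trans; [apply (W_CS q (fun k => p (z - k)%Z)); intro; apply Hp|].
      set (X := W (fun k => q k ^ 2 * p (z - k)%Z) (- Z.of_nat M) (2 * M + 1)).
      assert (0 <= X) by (apply W_nonneg; intro; apply Rmult_le_pos; auto).
      assert (W (fun k => p (z - k)%Z) (- Z.of_nat M) (2 * M + 1) <= 1).
      { rewrite W_rev. apply Zsum_le; auto. }
      assert (0 <= W (fun k => p (z - k)%Z) (- Z.of_nat M) (2 * M + 1)) by (apply W_nonneg; auto).
      nra. }
    rewrite (W_swap (fun z k => q k ^ 2 * p (z - k)%Z)).
    eapply Rle_trans; [| apply (Zsum_le (fun z => q z ^ 2) s (- Z.of_nat M) (2 * M + 1)); auto].
    apply W_le. intro k. rewrite W_scal, W_shift.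
    assert (W p (- Z.of_nat N - k) (2 * N + 1) <= 1) by (apply Zsum_le; auto).
    specialize (Hq2 k). nra. }
  apply lim_le with (SW (fun z => r z ^ 2)); auto.
  apply Zsum_lim; auto.
Qed.

Lemma Zsum_unique f l1 l2 : Zsum_is f l1 -> Zsum_is f l2 -> l1 = l2.
Proof. intros H1 H2. eapply UL_sequence; apply Zsum_lim; eauto. Qed.

Lemma law_not0 p q : ~ law_of_sum p 0 q.
Proof. intro H; inversion H. Qed.

Lemma law_unique p n q1 : law_of_sum p n q1 -> forall q2, law_of_sum p n q2 -> q1 = q2.
Proof.
  induction 1 as [|n q r Hq IH Hr]; intros q2 H2.
  - inversion H2; subst; [reflexivity|]. exfalso; eapply law_not0; eauto.
  - inversion H2; subst.
    + exfalso; eapply law_not0; eauto.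
    + match goal with H : law_of_sum p n ?q' |- _ => pose proof (IH _ H); subst q' end.
      apply functional_extensionality; intro z. eapply Zsum_unique; eauto.
Qed.

Lemma law_pos p n q : (forall z, 0 <= p z) -> (exists j, 0 < p j) ->
  law_of_sum p n q -> (forall z, 0 <= q z) /\ exists z, 0 < q z.
Proof.
  intros Hp Hj. induction 1 as [|n q r Hq IH Hr]; [split; auto|].
  destruct IH as [Hq0 [k Hk]]. destruct Hj as [j Hj].
  assert (Hf : forall z k, 0 <= q k * p (z - k)%Z) by (intros; apply Rmult_le_pos; auto).
  split.
  - intro z. pose proof (Zsum_le _ _ 0%Z 0 (Hf z) (Hr z)). simpl in H. exact H.
  - exists (k + j)%Z. pose proof (Zsum_le _ _ k 1 (Hf (k + j)%Z) (Hr (k + j)%Z)).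
    rewrite W1 in H. replace (k + j - k)%Z with j in H by lia.
    assert (0 < q k * p j) by (apply Rmult_lt_0_compat; auto). lra.
Qed.

Lemma pmf_pos p : is_pmf p -> exists j, 0 < p j.
Proof.
  intros [Hp H1]. apply NNPP; intro Hn.
  assert (E : forall z, p z = 0).
  { intro z. destruct (Hp z) as [|E]; [|auto]. exfalso; apply Hn; eauto. }
  pose proof (Zsum_lim _ _ H1) as L.
  assert (Un_cv (fun _ => 0) 1).
  { apply Un_cv_ext with (SW p); auto. intro M. unfold SW. rewrite (W_ext p (fun _ => 0)); auto. apply W_zero. }
  pose proof (UL_sequence _ _ _ H (Un_cv_const 0)). lra.
Qed.

Theorem lemma5 (p : Z -> R) (hp : is_pmf p) (n : nat) (hn : (1 <= n)%nat)
  (q r : Z -> R) (hq : law_of_sum p n q) (hr : law_of_sum p (S n) r)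
  (h h' : R) (hh : H2_is q h) (hh' : H2_is r h') :
  h <= h'.
Proof.
  destruct hh as [s [Hs ->]]. destruct hh' as [s' [Hs' ->]].
  pose proof hp as [Hp Hp1]. pose proof (pmf_pos p hp) as Hj.
  destruct (law_pos p n q Hp Hj hq) as [Hq0 _].
  destruct (law_pos p (S n) r Hp Hj hr) as [_ [z Hz]].
  inversion hr; subst.
  { lia. }
  match goal with H : law_of_sum p n ?q' |- _ => pose proof (law_unique p n q hq _ H); subst q' end.
  assert (Hle : s' <= s) by (apply (main_ineq p q r s s'); auto).
  assert (Hpos : 0 < s').
  { pose proof (Zsum_le _ _ z 1 (fun z => pow2_ge_0 (r z)) Hs'). rewrite W1 in H.
    assert (0 < r z ^ 2) by (apply pow_lt; auto). lra. }
  destruct Hle as [Hlt|Heq].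
  - pose proof (ln_increasing _ _ Hpos Hlt). lra.
  - subst; lra.
Qed.
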